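(* Let $B_0,\ldots,B_N$ be complex $d\times d$ matrices, $T(\lambda)=\sum_{i=0}^N\lambda^iB_i$, and $\mathcal{F}(\lambda)=\det T(\lambda)$. Let $e\ge0$ be the largest integer such that $\lambda^e$ divides $\mathcal{F}(\lambda)$, so $\mathcal{F}(\lambda)=\lambda^eg(\lambda)$ with $g$ a polynomial, $g(0)\ne0$. Let $\boldsymbol\lambda=(\lambda_1,\ldots,\lambda_m)$ be a stable non-resonant vector of eigenvalues none of which is zero. Then there exists a constant $C>0$ such that $$\|T(\boldsymbol\lambda^\alpha)^{-1}\|\le C\,|\boldsymbol\lambda^\alpha|^{-e}\qquad\text{for all }\alpha\in\mathbb{Z}_+^m\text{ with }|\alpha|\ge2.$$
   Context: $\|\cdot\|$ is any fixed matrix norm. $\boldsymbol\lambda^\alpha=\prod\lambda_i^{\alpha_i}$. A vector $\boldsymbol\lambda\in\mathbb{C}^m$ is a stable non-resonant vector of eigenvalues if $|\lambda_i|<1$, $\mathcal{F}(\lambda_i)=0$ for all $i$, and $\mathcal{F}(\boldsymbol\lambda^\alpha)\ne0$ for all $\alpha\in\mathbb{Z}_+^m$ with $|\alpha|\ge2$. *)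

(* Defs.v *)
From HB Require Import structures.
From mathcomp Require Import all_boot all_order all_algebra.
Set Implicit Arguments. Unset Strict Implicit. Unset Printing Implicit Defensive.
Import Order.TTheory GRing.Theory Num.Theory.
Local Open Scope ring_scope.

Definition Teval (C : numClosedFieldType) (d N : nat) (B : 'I_N.+1 -> 'M[C]_d)
  (mu : C) : 'M[C]_d := \sum_(i < N.+1) (mu ^+ i) *: B i.

Definition Tpoly (C : numClosedFieldType) (d N : nat) (B : 'I_N.+1 -> 'M[C]_d)
  : 'M[{poly C}]_d := \sum_(i < N.+1) ('X ^+ i) *: map_mx polyC (B i).

Definition Fpoly (C : numClosedFieldType) (d N : nat) (B : 'I_N.+1 -> 'M[C]_d)
  : {poly C} := \det (Tpoly B).

Definition mpow (C : numClosedFieldType) (m : nat) (lam : 'I_m -> C)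
  (alpha : 'I_m -> nat) : C := \prod_(i < m) lam i ^+ alpha i.
Definition mlen (m : nat) (alpha : 'I_m -> nat) : nat := \sum_(i < m) alpha i.

Definition stable_nonresonant (C : numClosedFieldType) (m : nat)
  (F : {poly C}) (lam : 'I_m -> C) : Prop :=
  (forall i, `|lam i| < 1) /\ (forall i, root F (lam i)) /\
  (forall alpha : 'I_m -> nat, (2 <= mlen alpha)%N -> ~~ root F (mpow lam alpha)).

Definition matrix_norm (C : numClosedFieldType) (d : nat)
  (nrm : 'M[C]_d -> C) : Prop :=
  (forall A, 0 <= nrm A) /\ (forall A, nrm A = 0 -> A = 0) /\
  (forall (a : C) A, nrm (a *: A) = `|a| * nrm A) /\
  (forall A B, nrm (A + B) <= nrm A + nrm B).

(* Main.v *)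
Require Import Defs.
From HB Require Import structures.
From mathcomp Require Import all_boot all_order all_algebra.
From mathcomp Require Import ring.
Import Order.TTheory GRing.Theory Num.Theory.
Set Implicit Arguments. Unset Strict Implicit.
Local Open Scope ring_scope.

Lemma bern (R : numDomainType) (h : R) k : 0 <= h -> 1 + h *+ k <= (1 + h) ^+ k.
Proof.
move=> h0; elim: k => [|k IH]; first by rewrite mulr0n expr0 addr0.
rewrite exprS; apply: le_trans (ler_wpM2l _ IH); last by rewrite addr_ge0.
have -> : (1 + h) * (1 + h *+ k) = 1 + h *+ k.+1 + (h * h) *+ k.
  by rewrite mulrS mulrDl mul1r mulrDr mulr1 mulrnAr; ring.
by rewrite lerDl mulrn_wge0 // mulr_ge0.
Qed.

Lemma powsmall (R : archiNumFieldType) (x eps : R) :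
  0 <= x -> x < 1 -> 0 < eps -> exists n, forall k, (n <= k)%N -> x ^+ k <= eps.
Proof.
move=> x0 x1 e0; have [->|xn0] := eqVneq x 0.
  by exists 1%N => -[|k] // _; rewrite expr0n ltW.
have xp : 0 < x by rewrite lt_def xn0.
set h := x^-1 - 1.
have hp : 0 < h by rewrite subr_gt0 invf_gt1.
have b0 : 0 <= (eps * h)^-1 by rewrite invr_ge0 ltW // mulr_gt0.
exists (Num.Def.archi_bound (eps * h)^-1) => k hk.
have Hk : (eps * h)^-1 < k%:R.
  apply: lt_le_trans (archi_boundP b0) _; by rewrite ler_nat.
have xk : x ^+ k = ((1 + h) ^+ k)^-1 by rewrite /h addrC subrK exprVn invrK.
have : eps^-1 <= (1 + h) ^+ k.
  apply: le_trans (bern k (ltW hp)).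
  apply: (@le_trans _ _ (h *+ k)); last by rewrite lerDr.
  rewrite -mulr_natr -ler_pdivrMl //.
  by rewrite mulrC -invfM; apply: ltW.
move=> H; rewrite xk -(invrK eps) lef_pV2 ?posrE ?invr_gt0 //.
by rewrite exprn_gt0 // addr_gt0.
Qed.

Definition pabs (R : numDomainType) (p : {poly R}) : R := \sum_(i < size p) `|p`_i|.

Lemma pabs_ge0 (R : numDomainType) (p : {poly R}) : 0 <= pabs p.
Proof. by apply: sumr_ge0 => i _; exact: normr_ge0. Qed.

Lemma horner_bound (R : numDomainType) (p : {poly R}) x :
  `|x| <= 1 -> `|p.[x]| <= pabs p.
Proof.
move=> x1; rewrite horner_coef; apply: le_trans (ler_norm_sum _ _ _) _.
apply: ler_sum => i _; rewrite normrM normrX.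
by apply: ler_piMr; [exact: normr_ge0 | exact: exprn_ile1].
Qed.

Lemma horner_near0 (R : numDomainType) (p : {poly R}) x :
  `|x| <= 1 -> `|p.[x] - p`_0| <= `|x| * pabs p.
Proof.
move=> x1; rewrite horner_coef /pabs.
case E: (size p) => [|n].
  move/eqP: E; rewrite size_poly_eq0 => /eqP ->.
  by rewrite !big_ord0 coef0 subrr normr0 mulr0.
rewrite !big_ord_recl /= expr0 mulr1 (addrC (p`_0)) addrK.
apply: le_trans (ler_norm_sum _ _ _) _.
rewrite mulrDr; apply: le_trans (_ : _ <= `|x| * \sum_(i < n) `|p`_(bump 0 i)|) _; last by apply: ler_wpDl; rewrite ?mulr_ge0.
rewrite mulr_sumr; apply: ler_sum => i _.
rewrite /bump /= add1n.
rewrite normrM normrX exprS mulrCA.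
apply: ler_wpM2l; first exact: normr_ge0.
by apply: ler_piMr; [exact: normr_ge0 | exact: exprn_ile1].
Qed.

Lemma nrm0 (C : numClosedFieldType) d (nrm : 'M[C]_d -> C) :
  matrix_norm nrm -> nrm 0 = 0.
Proof.
case=> _ [_ [hZ _]]; by rewrite -(scale0r (0 : 'M[C]_d)) hZ normr0 mul0r.
Qed.

Lemma nrm_sum (C : numClosedFieldType) d (nrm : 'M[C]_d -> C) I (r : seq I)
  (F : I -> 'M[C]_d) :
  matrix_norm nrm -> nrm (\sum_(i <- r) F i) <= \sum_(i <- r) nrm (F i).
Proof.
move=> hn; have [_ [_ [_ hD]]] := hn.
apply: (big_ind2 (fun A c => nrm A <= c)).
- by rewrite nrm0.
- move=> A a B b hA hB; apply: le_trans (hD A B) _; exact: lerD.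
- by [].
Qed.

Lemma nrm_bound (C : numClosedFieldType) d (nrm : 'M[C]_d -> C) (A : 'M[C]_d) :
  matrix_norm nrm ->
  nrm A <= \sum_(i < d) \sum_(j < d) `|A i j| * nrm (delta_mx i j).
Proof.
move=> hn; have [_ [_ [hZ _]]] := hn.
rewrite {1}(matrix_sum_delta A); apply: le_trans (nrm_sum _ _ hn) _.
apply: ler_sum => i _; apply: le_trans (nrm_sum _ _ hn) _.
by apply: ler_sum => j _; rewrite hZ.
Qed.

Lemma Teval_map (C : numClosedFieldType) (d N : nat) (B : 'I_N.+1 -> 'M[C]_d) mu :
  Teval B mu = map_mx (horner_eval mu) (Tpoly B).
Proof.
apply/matrixP => i j; rewrite !mxE /Teval /Tpoly summxE horner_evalE !summxE horner_sum.
apply: eq_bigr => k _; rewrite !mxE.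
by rewrite hornerM hornerXn hornerC.
Qed.

Lemma det_Teval (C : numClosedFieldType) (d N : nat) (B : 'I_N.+1 -> 'M[C]_d) mu :
  \det (Teval B mu) = (Fpoly B).[mu].
Proof. by rewrite Teval_map det_map_mx. Qed.

Lemma adj_Teval (C : numClosedFieldType) (d N : nat) (B : 'I_N.+1 -> 'M[C]_d) mu :
  \adj (Teval B mu) = map_mx (horner_eval mu) (\adj (Tpoly B)).
Proof. by rewrite Teval_map map_mx_adj. Qed.

Unset Implicit Arguments.

Theorem mainTheorem10 (C : archiClosedFieldType) (d N : nat)
  (B : 'I_N.+1 -> 'M[C]_d) (nrm : 'M[C]_d -> C) (e : nat) (g : {poly C})
  (m : nat) (lam : 'I_m -> C) :
  matrix_norm nrm ->
  Fpoly B = 'X ^+ e * g -> g.[0] != 0 ->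
  stable_nonresonant (Fpoly B) lam ->
  (forall i, lam i != 0) ->
  exists2 K : C, 0 < K &
    forall alpha : 'I_m -> nat, (2 <= mlen alpha)%N ->
      nrm (invmx (Teval B (mpow lam alpha))) <= K * `|mpow lam alpha| ^- e.
Proof.
move=> hn hF hg [hlt [hroot hnr]] hlam0.
have [nge0 [_ [hZ _]]] := hn.
set A := Tpoly B.
set K1 := \sum_(j < d) \sum_(k < d) pabs ((\adj A) j k) * nrm (delta_mx j k).
have K1ge0 : 0 <= K1.
  by apply: sumr_ge0 => j _; apply: sumr_ge0 => k _; rewrite mulr_ge0 ?pabs_ge0.
have hadj : forall mu, `|mu| <= 1 -> nrm (\adj (Teval B mu)) <= K1.
  move=> mu hmu; apply: le_trans (nrm_bound _ hn) _.
  apply: ler_sum => j _; apply: ler_sum => k _.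
  rewrite adj_Teval mxE horner_evalE.
  by apply: ler_wpM2r; [exact: nge0 | exact: horner_bound].
set g0 := g`_0.
have g0p : 0 < `|g0| by rewrite normr_gt0 /g0 -horner_coef0.
set S := pabs g.
have S1 : 0 < S + 1 by rewrite ltr_wpDl ?pabs_ge0.
set delta := `|g0| / (2 * (S + 1)).
have dp : 0 < delta by rewrite divr_gt0 // mulr_gt0.
have : forall i, exists n, forall k, (n <= k)%N -> `|lam i| ^+ k <= delta.
  move=> i; apply: powsmall => //; exact: normr_ge0.
case/fin_all_exists => nf hnf.
set n0 := (\sum_i nf i)%N.
set G := 2 / `|g0| + \sum_(f : {ffun 'I_m -> 'I_n0}) `|g.[mpow lam (fun i => (f i : nat))]|^-1.
have Gs0 : 0 <= \sum_(f : {ffun 'I_m -> 'I_n0}) `|g.[mpow lam (fun i => (f i : nat))]|^-1.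
  by apply: sumr_ge0 => f _; rewrite invr_ge0.
have G0 : 0 < 2 / `|g0| by rewrite divr_gt0.
have Gp : 0 < G by rewrite /G ltr_wpDr.
exists ((K1 + 1) * G); first by rewrite mulr_gt0 // ltr_wpDl.
move=> alpha hal; set mu := mpow lam alpha.
have mu1 : `|mu| <= 1.
  rewrite /mu /mpow normr_prod; apply: prodr_ile1 => i _.
  by rewrite normrX exprn_ge0 ?exprn_ile1 ?normr_ge0 // ltW.
have mu0 : mu != 0 by apply/prodf_neq0 => i _; rewrite expf_neq0.
have Fmu : (Fpoly B).[mu] = mu ^+ e * g.[mu] by rewrite hF hornerM hornerXn.
have Fne : (Fpoly B).[mu] != 0 := hnr alpha hal.
have ginv : `|g.[mu]|^-1 <= G.
  case: (boolP [forall i, (alpha i < n0)%N]) => H.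
    move/forallP: H => H.
    pose f : {ffun 'I_m -> 'I_n0} := [ffun i => Ordinal (H i)].
    have -> : mu = mpow lam (fun i => (f i : nat)).
      by apply: eq_bigr => i _; rewrite ffunE.
    rewrite /G (bigD1 f) //=; apply: ler_wpDl; first exact: ltW.
    by rewrite lerDl sumr_ge0 // => h _; rewrite invr_ge0.
  move/forallPn: H => [i]; rewrite -leqNgt => Hi.
  have mud : `|mu| <= delta.
    rewrite /mu /mpow normr_prod (bigD1 i) //= normrX.
    apply: le_trans (ler_piMr _ _) _.
    - by rewrite exprn_ge0.
    - apply: prodr_ile1 => j _.
      by rewrite normrX exprn_ge0 ?exprn_ile1 ?normr_ge0 // ltW.
    apply: hnf; apply: leq_trans Hi; by rewrite /n0 (bigD1 i) //= leq_addr.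
  have gmu : `|g0| / 2 <= `|g.[mu]|.
    have h1 := horner_near0 g mu1.
    have hd : delta * (S + 1) = `|g0| / 2.
      rewrite /delta invfM mulrA -mulrA mulVf ?mulr1 //; exact: lt0r_neq0.
    have h2 : `|mu| * S <= `|g0| / 2.
      rewrite -hd mulrDr mulr1; apply: le_trans (ler_wpM2r (pabs_ge0 _) mud) _.
      by rewrite lerDl ltW.
    have h3 := lerB_dist g0 g.[mu].
    rewrite distrC in h3.
    have h4 : `|g0| - `|g.[mu]| <= `|g0| / 2 := le_trans h3 (le_trans h1 h2).
    rewrite lerBlDr in h4.
    rewrite -(lerD2r (`|g0| / 2)) -splitr; by rewrite addrC.
  apply: (@le_trans _ _ (2 / `|g0|)); last by rewrite /G lerDl.
  rewrite -(invf_div (`|g0|)) lef_pV2 // posrE.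
    by apply: lt_le_trans gmu; rewrite divr_gt0.
  by rewrite divr_gt0.
rewrite /invmx unitmxE unitfE det_Teval Fne /= hZ Fmu normfV normrM normrX invfM.
rewrite -mulrA mulrC; apply: ler_wpM2r; first by rewrite invr_ge0 exprn_ge0.
rewrite mulrC; apply: ler_pM; rewrite ?invr_ge0 ?nge0 //.
by apply: le_trans (hadj _ mu1) _; rewrite lerDl.
Qed.
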